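(* Let $u,v\in\{m_1,\dots,m_{k+1}\}^*$. Then there exists a state $s\in\mathcal S_k$ with $u\ast s=v\ast s\neq\varnothing$ if and only if $u\sim v$.
   Context: Fix $k\ge 0$. A system of $k$ stacks in series consists of an input queue, stacks $1,\dots,k$, and an output queue. A state records the contents of each stack and each queue (finitely many distinct labelled elements); there is one additional ''illegal'' state $\varnothing$; $\mathcal S_k$ denotes the set of all states including $\varnothing$. The moves are $m_1,\dots,m_{k+1}$: $m_i$ ($1\le i\le k$) pushes an element onto stack $i$, taking it from the front of the input queue if $i=1$ and popping it from the top of stack $i-1$ if $i>1$; $m_{k+1}$ pops the top of stack $k$ and enqueues it at the back of the output queue. For a word $w$ and state $s$, $w\ast s$ is obtained by applying the moves of $w$ left to right, with $w\ast s=\varnothing$ if some move is illegal and $w\ast\varnothing=\varnothing$. For words $x,y$ define $x\sim y$ iff $x\ast s=y\ast s$ for all $s\in\mathcal S_k$. *)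

(* Defs.v *)
From mathcomp Require Import all_boot.
Set Implicit Arguments. Unset Strict Implicit. Unset Printing Implicit Defensive.

(* A (legal) configuration of the system of k stacks in series.
   Elements are labelled by natural numbers.
   - inq  : input queue, front = head of the list
   - stks : the stacks 1..k (stks`_j is stack j+1), top = head of the list
   - outq : output queue, front = head, back = last element *)
Record config := Config { inq : seq nat; stks : seq (seq nat); outq : seq nat }.

Definition wf_config (k : nat) (c : config) : bool :=
  (size (stks c) == k) && uniq (inq c ++ flatten (stks c) ++ outq c).

(* States S_k: [None] is the illegal state, [Some c] a legal one. *)
Definition state := option config.
Definition is_state (k : nat) (s : state) : bool :=
  if s is Some c then wf_config k c else true.

(* Moves m_1, ..., m_{k+1} are represented by ordinals i : 'I_k.+1,
   with i standing for m_{i+1}. *)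
Definition move (k : nat) := 'I_k.+1.

(* Remove the element to be moved by m_{i+1}: front of the input queue if
   i = 0, else the top of stack i (0-based index i-1). *)
Definition take_src (i : nat) (c : config) : option (nat * config) :=
  if i == 0 then
    match inq c with
    | x :: r => Some (x, Config r (stks c) (outq c))
    | [::] => None
    end
  else
    match nth [::] (stks c) i.-1 with
    | x :: r => Some (x, Config (inq c) (set_nth [::] (stks c) i.-1 r) (outq c))
    | [::] => None
    end.

(* Put the element: onto stack i+1 (0-based index i) if i < k, else at the
   back of the output queue (i = k). *)
Definition put_dst (k i x : nat) (c : config) : config :=
  if i == k then Config (inq c) (stks c) (rcons (outq c) x)
  else Config (inq c) (set_nth [::] (stks c) i (x :: nth [::] (stks c) i)) (outq c).

Definition step (k : nat) (m : move k) (c : config) : state :=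
  match take_src m c with
  | Some (x, c') => Some (put_dst k m x c')
  | None => None
  end.

Definition act (k : nat) (w : seq (move k)) (s : state) : state :=
  foldl (fun s m => obind (step m) s) s w.

Definition equiv_words (k : nat) (x y : seq (move k)) : Prop :=
  forall s : state, is_state k s -> act x s = act y s.

(* Main.v *)
Require Import Defs.
From mathcomp Require Import all_boot zify.
Set Implicit Arguments. Unset Strict Implicit. Unset Printing Implicit Defensive.

Lemma act_cons k (m : move k) w s : act (m :: w) s = act w (obind (step m) s).
Proof. by []. Qed.

Lemma act_None k (w : seq (move k)) : act w None = None.
Proof. by elim: w. Qed.

Definition cmap (f : nat -> nat) (c : config) :=
  Config (map f (inq c)) (map (map f) (stks c)) (map f (outq c)).

Lemma nth_mapmap (f : nat -> nat) (ss : seq (seq nat)) j :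
  nth ([::] : seq nat) (map (map f) ss) j = map f (nth [::] ss j).
Proof. by elim: ss j => [|s ss IH] [|j] //=. Qed.

Lemma set_nth_mapmap (f : nat -> nat) (ss : seq (seq nat)) j t :
  map (map f) (set_nth ([::] : seq nat) ss j t) = set_nth [::] (map (map f) ss) j (map f t).
Proof. by elim: ss j => [|s ss IH] [|j] //=; rewrite ?IH //; elim: j => //= j ->. Qed.

Lemma take_src_cmap f i c :
  take_src i (cmap f c) = omap (fun p => (f p.1, cmap f p.2)) (take_src i c).
Proof.
rewrite /take_src /=; case: eqP => _.
  by case: (inq c).
rewrite nth_mapmap; case: (nth [::] (stks c) i.-1) => //= x r.
by rewrite /cmap /= set_nth_mapmap.
Qed.

Lemma put_dst_cmap f k i x c :
  cmap f (put_dst k i x c) = put_dst k i (f x) (cmap f c).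
Proof.
rewrite /put_dst; case: eqP => _; rewrite /cmap /=.
  by rewrite map_rcons.
by rewrite set_nth_mapmap /= nth_mapmap.
Qed.

Lemma step_cmap f k (m : move k) c :
  step m (cmap f c) = omap (cmap f) (step m c).
Proof.
rewrite /step take_src_cmap; case: (take_src m c) => [[x c']|] //=.
by rewrite put_dst_cmap.
Qed.

Lemma act_cmap f k (w : seq (move k)) c :
  act w (Some (cmap f c)) = omap (cmap f) (act w (Some c)).
Proof.
elim: w c => [|m w IH] c //.
rewrite !act_cons /= step_cmap; case: (step m c) => [d|] /=; first exact: IH.
by rewrite !act_None.
Qed.
Definition mkz (s t : seq (seq nat)) := [seq p.1 ++ p.2 | p <- zip s t].
Definition ext (c e : config) :=
  Config (inq c ++ inq e) (mkz (stks c) (stks e)) (outq e ++ outq c).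
Definition elems (c : config) := inq c ++ flatten (stks c) ++ outq c.

Lemma nth_mkz s t j : size s = size t ->
  nth [::] (mkz s t) j = nth [::] s j ++ nth [::] t j.
Proof.
elim: s t j => [|a s IH] [|b t] [|j] //= [] e; by rewrite ?IH.
Qed.

Lemma size_mkz s t : size s = size t -> size (mkz s t) = size s.
Proof. by move=> e; rewrite size_map size_zip e minnn. Qed.

Lemma set_nth_mkz s t j a : j < size s -> size s = size t ->
  set_nth [::] (mkz s t) j (a ++ nth [::] t j) = mkz (set_nth [::] s j a) t.
Proof.
elim: s t j => [|x s IH] [|b t] [|j] //= hj [] e; by rewrite ?IH.
Qed.

Lemma take_src_size k i c x c1 : i <= k -> size (stks c) = k ->
  take_src i c = Some (x, c1) -> size (stks c1) = k.
Proof.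
rewrite /take_src; case: eqP => i0 hi hs.
  by case: (inq c) => //= y r [_ <-].
case: (nth [::] (stks c) i.-1) => //= y r [_ <-] /=.
rewrite size_set_nth hs; apply/maxn_idPr; lia.
Qed.

Lemma put_dst_size k i x c : i <= k -> size (stks c) = k ->
  size (stks (put_dst k i x c)) = k.
Proof.
rewrite /put_dst; case: eqP => ik hi hs //=.
rewrite size_set_nth hs; apply/maxn_idPr; lia.
Qed.

Lemma step_size k (m : move k) c d : size (stks c) = k ->
  step m c = Some d -> size (stks d) = k.
Proof.
rewrite /step => hs; case e: (take_src m c) => [[x c1]|] //= [<-].
have hm : m <= k by rewrite -ltnS.
apply: put_dst_size => //; exact: take_src_size e.
Qed.

Lemma take_src_ext k i c e x c1 : i <= k -> size (stks c) = k ->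
  size (stks e) = k ->
  take_src i c = Some (x, c1) -> take_src i (ext c e) = Some (x, ext c1 e).
Proof.
rewrite /take_src; case: eqP => i0 hi hs he.
  by rewrite /ext /=; case: (inq c) => //= y r [<- <-].
rewrite /= nth_mkz ?hs ?he //.
case: (nth [::] (stks c) i.-1) => //= y r [<- <-].
rewrite /ext /= set_nth_mkz // ?hs ?he //; lia.
Qed.

Lemma put_dst_ext k i x c e : i <= k -> size (stks c) = k ->
  size (stks e) = k ->
  put_dst k i x (ext c e) = ext (put_dst k i x c) e.
Proof.
rewrite /put_dst; case: eqP => ik hi hs he; rewrite /ext /=.
  by rewrite rcons_cat.
rewrite nth_mkz ?hs ?he // -cat_cons set_nth_mkz ?hs ?he //; lia.
Qed.

Lemma step_ext k (m : move k) c e d : size (stks c) = k -> size (stks e) = k ->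
  step m c = Some d -> step m (ext c e) = Some (ext d e).
Proof.
rewrite /step => hs he; case h: (take_src m c) => [[x c1]|] //= [<-].
have hm : m <= k by rewrite -ltnS.
rewrite (take_src_ext hm hs he h) /= put_dst_ext //; exact: take_src_size h.
Qed.

Lemma act_ext k (w : seq (move k)) c e d : size (stks c) = k -> size (stks e) = k ->
  act w (Some c) = Some d -> act w (Some (ext c e)) = Some (ext d e).
Proof.
elim: w c => [|m w IH] c hs he; first by case=> ->.
rewrite !act_cons /=; case h: (step m c) => [c1|] /=; last by rewrite act_None.
rewrite (step_ext hs he h); apply: IH => //; exact: step_size h.
Qed.

Lemma take_src_ext_None k i c e x c2 : i <= k -> size (stks c) = k ->
  size (stks e) = k -> take_src i c = None ->
  take_src i (ext c e) = Some (x, c2) -> x \in elems e.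
Proof.
rewrite /take_src; case: eqP => i0 hi hs he.
  rewrite /ext /elems /=; case: (inq c) => //= _; case: (inq e) => //= y r [<- _].
  by rewrite inE eqxx.
rewrite /= nth_mkz ?hs ?he //.
case: (nth [::] (stks c) i.-1) => //= _.
case ht: (nth [::] (stks e) i.-1) => [|y r] //= [<- _].
rewrite /elems mem_cat; apply/orP; right; rewrite mem_cat; apply/orP; left.
apply/flattenP; exists (y :: r); last exact: mem_head.
rewrite -ht; apply: mem_nth; rewrite he; lia.
Qed.
Definition sumg (g : nat -> nat) (s : seq nat) := sumn (map g s).
Fixpoint sumst (w g : nat -> nat) i (ss : seq (seq nat)) :=
  if ss is s :: ss' then w i * sumg g s + sumst w g i.+1 ss' else 0.
Definition Phi k (w g : nat -> nat) c :=
  w 0 * sumg g (inq c) + sumst w g 1 (stks c) + w k.+1 * sumg g (outq c).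

Lemma sumg_cat g s t : sumg g (s ++ t) = sumg g s + sumg g t.
Proof. by rewrite /sumg map_cat sumn_cat. Qed.
Lemma sumg_cons g x s : sumg g (x :: s) = g x + sumg g s.
Proof. by []. Qed.
Lemma sumg_rcons g x s : sumg g (rcons s x) = sumg g s + g x.
Proof. by rewrite -cats1 sumg_cat /sumg /= addn0. Qed.

Lemma sumst_set_nth w g i ss j t : j < size ss ->
  sumst w g i (set_nth [::] ss j t) + w (i + j) * sumg g (nth [::] ss j)
  = sumst w g i ss + w (i + j) * sumg g t.
Proof.
elim: ss i j => [|s ss IH] i [|j] //= hj.
  rewrite addn0; lia.
have := IH i.+1 j hj; rewrite addSnnS; lia.
Qed.

Lemma sumst_mkz w g i s t : size s = size t ->
  sumst w g i (mkz s t) = sumst w g i s + sumst w g i t.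
Proof.
elim: s t i => [|a s IH] [|b t] i //= [] e.
rewrite IH // sumg_cat mulnDr; lia.
Qed.

Lemma Phi_ext k w g c e : size (stks c) = size (stks e) ->
  Phi k w g (ext c e) = Phi k w g c + Phi k w g e.
Proof.
move=> hs; rewrite /Phi /ext /= sumst_mkz // !sumg_cat !mulnDr; lia.
Qed.

Lemma take_src_Phi k w g i c x c1 : i <= k -> size (stks c) = k ->
  take_src i c = Some (x, c1) -> Phi k w g c1 + w i * g x = Phi k w g c.
Proof.
rewrite /take_src /Phi; case: eqP => i0 hi hs.
  case: (inq c) => //= y r [<- <-] /=; rewrite i0 sumg_cons mulnDr; lia.
case h: (nth [::] (stks c) i.-1) => [|y r] //= [<- <-] /=.
have hj : i.-1 < size (stks c) by rewrite hs; lia.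
have := sumst_set_nth w g 1 r hj; rewrite h sumg_cons.
have -> : 1 + i.-1 = i by lia.
rewrite mulnDr; lia.
Qed.

Lemma put_dst_Phi k w g i x c : i <= k -> size (stks c) = k ->
  Phi k w g (put_dst k i x c) = Phi k w g c + w i.+1 * g x.
Proof.
rewrite /put_dst /Phi; case: eqP => ik hi hs /=.
  rewrite sumg_rcons mulnDr ik; lia.
have hj : i < size (stks c) by rewrite hs; lia.
have := sumst_set_nth w g 1 (x :: nth [::] (stks c) i) hj.
rewrite sumg_cons add1n mulnDr; lia.
Qed.

Lemma stepE k (m : move k) c d : step m c = Some d ->
  exists x c1, take_src m c = Some (x, c1) /\ d = put_dst k m x c1.
Proof.
rewrite /step; case: (take_src m c) => [[x c1]|] //= [<-]; by exists x, c1.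
Qed.

Lemma step_Phi k (m : move k) c d x c1 w g : size (stks c) = k ->
  take_src m c = Some (x, c1) -> d = put_dst k m x c1 ->
  Phi k w g d + w m * g x = Phi k w g c + w m.+1 * g x.
Proof.
move=> hs h ->; have hm : m <= k by rewrite -ltnS.
rewrite put_dst_Phi //; last exact: take_src_size h.
rewrite -(take_src_Phi w g hm hs h); lia.
Qed.

Definition wid := fun n : nat => n.
Definition w1 := fun _ : nat => 1.

Lemma step_Phi_mono k (m : move k) c d g : size (stks c) = k ->
  step m c = Some d -> Phi k wid g c <= Phi k wid g d.
Proof.
move=> hs /stepE [x [c1 [h e]]].
have := step_Phi wid g hs h e; rewrite /wid mulSn; lia.
Qed.

Lemma step_Phi1 k (m : move k) c d g : size (stks c) = k ->
  step m c = Some d -> Phi k w1 g d = Phi k w1 g c.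
Proof.
move=> hs /stepE [x [c1 [h e]]].
have := step_Phi w1 g hs h e; rewrite /w1; lia.
Qed.

Lemma act_Phi k (w : seq (move k)) c d g : size (stks c) = k ->
  act w (Some c) = Some d ->
  Phi k wid g c <= Phi k wid g d /\ Phi k w1 g d = Phi k w1 g c.
Proof.
elim: w c => [|m w IH] c hs; first by case=> ->.
rewrite act_cons /=; case h: (step m c) => [c1|] /=; last by rewrite act_None.
move=> /IH [].
  exact: step_size h.
move=> h1 h2; split; first by apply: leq_trans h1; exact: step_Phi_mono g hs h.
by rewrite h2 (step_Phi1 g hs h).
Qed.

Lemma sumst0 w g i ss : sumst w1 g i ss = 0 -> sumst w g i ss = 0.
Proof.
elim: ss i => [|s ss IH] i //= /eqP; rewrite addn_eq0 => /andP [/eqP h1 /eqP h2].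
by rewrite (IH _ h2) /w1 mul1n in h1 *; rewrite h1 muln0.
Qed.

Lemma Phi0 k w g c : Phi k w1 g c = 0 -> Phi k w g c = 0.
Proof.
rewrite /Phi /w1 !mul1n => /eqP; rewrite !addn_eq0 => /andP [/andP [/eqP a /eqP b] /eqP d].
by rewrite a d (sumst0 w b) !muln0.
Qed.

Lemma sumg0 g s : all (fun x => g x == 0) s -> sumg g s = 0.
Proof. by elim: s => [|x s IH] //=; rewrite sumg_cons => /andP [/eqP -> /IH ->]. Qed.

Lemma Phi_all0 k g c : all (fun x => g x == 0) (elems c) -> Phi k w1 g c = 0.
Proof.
rewrite /elems !all_cat => /and3P [a b d].
rewrite /Phi (sumg0 a) (sumg0 d) !muln0 !addn0.
elim: (stks c) 1 b => [|s ss IH] i //=; rewrite all_cat => /andP [b1 b2].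
by rewrite (sumg0 b1) muln0 (IH _ b2).
Qed.
Lemma catsI' (s1 s2 t : seq nat) : s1 ++ t = s2 ++ t -> s1 = s2.
Proof.
move=> h; have hs : size s1 = size s2.
  by have := congr1 size h; rewrite !size_cat; lia.
by move/eqP: h; rewrite eqseq_cat // => /andP [/eqP].
Qed.

Lemma catIs' (s1 s2 t : seq nat) : t ++ s1 = t ++ s2 -> s1 = s2.
Proof. by move/eqP; rewrite eqseq_cat // => /andP [_ /eqP]. Qed.

Lemma mkz_inj s1 s2 t : size s1 = size t -> size s2 = size t ->
  mkz s1 t = mkz s2 t -> s1 = s2.
Proof.
elim: s1 s2 t => [|a s1 IH] [|b s2] [|x t] //= [h1] [h2] [/catsI' -> /IH ->] //.
Qed.

Lemma ext_inj c d e : size (stks c) = size (stks e) -> size (stks d) = size (stks e) ->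
  ext c e = ext d e -> c = d.
Proof.
case: c => a b o; case: d => a' b' o' /= h1 h2 [/catsI' -> /(mkz_inj h1 h2) -> /catIs' ->].
by [].
Qed.

Lemma act_size k (w : seq (move k)) c d : size (stks c) = k ->
  act w (Some c) = Some d -> size (stks d) = k.
Proof.
elim: w c => [|m w IH] c hs; first by case=> <-.
rewrite act_cons /=; case h: (step m c) => [c1|] /=; last by rewrite act_None.
apply: IH; exact: step_size h.
Qed.

Section L3.
Variables (k : nat) (g : nat -> nat) (e : config).
Hypothesis he : size (stks e) = k.
Hypothesis ge : forall x, x \in elems e -> g x = 1.

Lemma L3 (w : seq (move k)) c D : size (stks c) = k -> Phi k w1 g c = 0 ->
  act w (Some (ext c e)) = Some D -> Phi k wid g D <= Phi k wid g e ->
  act w (Some c) <> None.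
Proof.
elim: w c => [|m w IH] c hs hz //.
rewrite !act_cons /=; case h: (step m c) => [c1|] /=.
  rewrite (step_ext hs he h) /=; apply: IH; first exact: step_size h.
  by rewrite (step_Phi1 g hs h).
case h2: (step m (ext c e)) => [c2|] /=; last by rewrite act_None.
have hse : size (stks (ext c e)) = k by rewrite /ext /= size_mkz ?hs ?he.
move=> hD hle _.
have [x [c1' [ht hc2]]] := stepE h2.
have hm : m <= k by rewrite -ltnS.
have hn : take_src m c = None.
  by move: h; rewrite /step; case: (take_src m c) => [[]|].
have gx : g x = 1 by apply: ge; exact: take_src_ext_None hm hs he hn ht.
have := step_Phi wid g hse ht hc2; rewrite gx !muln1.
have -> : wid m.+1 = (wid m).+1 by [].
have [hm2 _] := act_Phi g (step_size hse h2) hD.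
rewrite Phi_ext ?hs ?he // (Phi0 wid hz); lia.
Qed.

Lemma transfer (u v : seq (move k)) c d : size (stks c) = k -> Phi k w1 g c = 0 ->
  act u (Some (ext c e)) = act v (Some (ext c e)) ->
  act u (Some c) = Some d -> act v (Some c) = Some d.
Proof.
move=> hs hz huv hu.
have hd := act_size hs hu.
have hvD : act v (Some (ext c e)) = Some (ext d e) by rewrite -huv; exact: act_ext.
have [_ hzd] := act_Phi g hs hu.
rewrite hz in hzd.
case hv: (act v (Some c)) => [d'|]; last first.
  exfalso; apply: (L3 hs hz hvD) => //.
  by rewrite Phi_ext ?hd ?he // (Phi0 wid hzd).
have := act_ext hs he hv; rewrite hvD => /(congr1 (fun o => if o is Some x then x else c)) /=.
by move=> /ext_inj -> //; rewrite he ?hd ?(act_size hs hv).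
Qed.
End L3.
Lemma map_flatten' (f : nat -> nat) (ss : seq (seq nat)) :
  map f (flatten ss) = flatten (map (map f) ss).
Proof. by elim: ss => //= s ss IH; rewrite map_cat IH. Qed.

Lemma elems_cmap f c : elems (cmap f c) = map f (elems c).
Proof. by rewrite /elems /cmap /= !map_cat map_flatten'. Qed.

Definition sameshape (c d : config) :=
  [/\ size (inq c) = size (inq d), shape (stks c) = shape (stks d)
    & size (outq c) = size (outq d)].

Lemma config_eq c d : sameshape c d -> elems c = elems d -> c = d.
Proof.
case: c d => [a s o] [a' s' o'] [/= h1 h2 h3] /eqP.
rewrite /elems /= eqseq_cat // => /andP [/eqP -> ].
have h4 : size (flatten s) = size (flatten s') by rewrite !size_flatten h2.
rewrite eqseq_cat // => /andP [/eqP hf /eqP ->].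
by rewrite (eq_from_flatten_shape hf h2).
Qed.

Lemma sameshape_cmap f c : sameshape (cmap f c) c.
Proof.
split; rewrite /cmap /= ?size_map //.
by rewrite /shape -map_comp; apply: eq_map => x /=; rewrite size_map.
Qed.

Lemma size_elems c : size (elems c) = size (inq c) + sumn (shape (stks c)) + size (outq c).
Proof. by rewrite /elems !size_cat size_flatten addnA. Qed.

Lemma map_index_iota (s : seq nat) : uniq s -> map (index^~ s) s = iota 0 (size s).
Proof.
move=> us; rewrite -{2}(mkseq_nth 0 s) /mkseq -map_comp.
rewrite -{2}(map_id (iota 0 (size s))); apply/eq_in_map => i.
move=> hi; rewrite /= index_uniq //; by move: hi; rewrite mem_iota add0n => /andP [].
Qed.

Lemma sameshape_sym c d : sameshape c d -> sameshape d c.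
Proof. by case=> *; split. Qed.

Lemma sameshape_trans c d e : sameshape c d -> sameshape d e -> sameshape c e.
Proof. by case=> a b c1 [a' b' c']; split; congruence. Qed.

Lemma canon c0 c : uniq (elems c0) -> sameshape c c0 ->
  c = cmap (nth 0 (elems c)) (cmap (index^~ (elems c0)) c0).
Proof.
move=> u h; apply: config_eq.
  apply: sameshape_trans h _; apply: sameshape_sym.
  apply: sameshape_trans (sameshape_cmap _ _) (sameshape_cmap _ _).
rewrite !elems_cmap map_index_iota //.
have -> : size (elems c0) = size (elems c).
  by case: h => a b d; rewrite !size_elems a b d.
by rewrite -/(mkseq _ _) mkseq_nth.
Qed.

Lemma agree_shape k (u v : seq (move k)) c0 d0 : uniq (elems c0) ->
  act u (Some c0) = Some d0 -> act v (Some c0) = Some d0 ->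
  forall c, sameshape c c0 -> act u (Some c) = act v (Some c) /\ act u (Some c) <> None.
Proof.
move=> uc hu hv c hc; rewrite (canon uc hc) !act_cmap hu hv; by split.
Qed.
Lemma mkz_cons a s b t : mkz (a :: s) (b :: t) = (a ++ b) :: mkz s t.
Proof. by []. Qed.

Definition top_of (c0 B : config) :=
  Config (take (size (inq c0)) (inq B))
         [seq take p.1 p.2 | p <- zip (shape (stks c0)) (stks B)]
         (drop (size (outq B) - size (outq c0)) (outq B)).
Definition bot_of (c0 B : config) :=
  Config (drop (size (inq c0)) (inq B))
         [seq drop p.1 p.2 | p <- zip (shape (stks c0)) (stks B)]
         (take (size (outq B) - size (outq c0)) (outq B)).

Lemma mkz_take_drop (sh : seq nat) ss : size sh = size ss ->
  mkz [seq take p.1 p.2 | p <- zip sh ss] [seq drop p.1 p.2 | p <- zip sh ss] = ss.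
Proof.
elim: sh ss => [|n sh IH] [|s ss] //= [h].
by rewrite mkz_cons cat_take_drop IH.
Qed.

Lemma decomp c0 B : size (stks c0) = size (stks B) ->
  ext (top_of c0 B) (bot_of c0 B) = B.
Proof.
case: B => a s o h; rewrite /ext /top_of /bot_of /= !cat_take_drop mkz_take_drop //.
by rewrite size_map.
Qed.

Lemma shape_take_mkz s t : size s = size t ->
  shape [seq take p.1 p.2 | p <- zip (shape t) (mkz s t)] = shape t.
Proof.
elim: s t => [|a s IH] [|b t] //= [h]; rewrite -/(mkz s t) IH // size_takel //.
by rewrite size_cat leq_addl.
Qed.

Lemma size_stks_bot k c0 B : size (stks c0) = k -> size (stks B) = k ->
  size (stks (bot_of c0 B)) = k.
Proof. by move=> h1 h2; rewrite /bot_of /= size_map size_zip size_map h1 h2 minnn. Qed.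

Lemma top_shape k c e c0 : size (stks c) = k -> size (stks e) = k ->
  sameshape e c0 -> sameshape (top_of c0 (ext c e)) c0.
Proof.
move=> hc he [h1 h2 h3]; split; rewrite /top_of /ext /=.
- by rewrite size_takel // size_cat -h1 leq_addl.
- by rewrite -h2 shape_take_mkz ?hc ?he.
- rewrite size_drop size_cat -h3; lia.
Qed.

Definition Big n c := (n <= size (inq c)) && all (fun s => n <= size s) (stks c).

Lemma all_set_nth (P : pred (seq nat)) s j y : j < size s -> all P s -> P y ->
  all P (set_nth [::] s j y).
Proof.
elim: s j => [|a s IH] [|j] //= hj /andP [pa ps] py; first by rewrite py.
by rewrite pa IH.
Qed.

Lemma take_src_big k i c n : i <= k -> size (stks c) = k -> Big n.+1 c ->
  exists x c1, take_src i c = Some (x, c1) /\ Big n c1.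
Proof.
rewrite /take_src /Big; case: eqP => i0 hi hs /andP [h1 h2].
  case: (inq c) h1 => //= x r h1; exists x, (Config r (stks c) (outq c)); split => //=.
  apply/andP; split; first done; apply: sub_all h2 => s; exact: ltnW.
have hj : i.-1 < size (stks c) by rewrite hs; lia.
have := allP h2 _ (mem_nth [::] hj).
case: (nth [::] (stks c) i.-1) => //= x r hr.
exists x, (Config (inq c) (set_nth [::] (stks c) i.-1 r) (outq c)); split => //=.
apply/andP; split; first exact: ltnW.
by apply: all_set_nth => //; apply: sub_all h2 => s; exact: ltnW.
Qed.
Lemma put_dst_big k i x c n : i <= k -> size (stks c) = k -> Big n c ->
  Big n (put_dst k i x c).
Proof.
rewrite /put_dst /Big; case: eqP => ik hi hs /andP [h1 h2].
  by rewrite /= h1.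
have hj : i < size (stks c) by rewrite hs; lia.
have := allP h2 _ (mem_nth [::] hj) => hn.
rewrite /= h1 /=; apply: all_set_nth => //=; exact: leqW.
Qed.

Lemma act_legal k (w : seq (move k)) c : size (stks c) = k -> Big (size w) c ->
  act w (Some c) <> None.
Proof.
elim: w c => [|m w IH] c hs hb //.
have hm : m <= k by rewrite -ltnS.
have [x [c1 [ht hb1]]] := take_src_big hm hs hb.
have hs1 := take_src_size hm hs ht.
rewrite act_cons /= /step ht /=; apply: IH.
  exact: put_dst_size.
exact: put_dst_big.
Qed.

Lemma le_sumn x (s : seq nat) : x \in s -> x <= sumn s.
Proof.
elim: s => //= y s IH; rewrite inE => /orP [/eqP ->|/IH h]; first exact: leq_addr.
exact: leq_trans h (leq_addl _ _).
Qed.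

Unset Implicit Arguments.

Theorem proposition4 (k : nat) (u v : seq (move k)) :
  (exists s : state, [/\ is_state k s, act u s = act v s & act u s <> None])
  <-> equiv_words u v.
Proof.
split.
- case=> [[c0|]] [hs0 heq hne]; last by rewrite act_None in hne.
  move: hs0 => /= /andP [/eqP hk0 hu0].
  have hu0' : uniq (elems c0) by [].
  case hd0: (act u (Some c0)) hne => [d0|] // _.
  rewrite hd0 in heq.
  have AG := agree_shape hu0' hd0 (esym heq).
  move=> [c|] /=; last by rewrite !act_None.
  move=> /andP [/eqP hk _].
  pose M := (sumn (elems c)).+1.
  pose g := fun x => nat_of_bool (M <= x).
  pose e := Config (nseq (size (inq c0)) M) [seq nseq (size s) M | s <- stks c0]
                   (nseq (size (outq c0)) M).
  have he : size (stks e) = k by rewrite /= size_map.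
  have hse : sameshape e c0.
    split; rewrite /= ?size_nseq //.
    by rewrite /shape -map_comp; apply: eq_map => s /=; rewrite size_nseq.
  have ge : forall x, x \in elems e -> g x = 1.
    move=> x; rewrite /elems /= !mem_cat => /or3P [| /flattenP [s /mapP [s' _ ->]] |];
      rewrite ?mem_nseq => /andP [_ /eqP ->]; by rewrite /g leqnn.
  have hz : Phi k w1 g c = 0.
    apply: Phi_all0; apply/allP => x /le_sumn hx.
    by rewrite /g; case: leqP => //; rewrite /M; lia.
  have hB : act u (Some (ext c e)) = act v (Some (ext c e)).
    have hsz : size (stks c0) = size (stks (ext c e)) by rewrite /= size_mkz hk ?he.
    rewrite -(decomp hsz).
    have hX := top_shape hk he hse.
    have [huv hn] := AG _ hX.
    have hXk : size (stks (top_of c0 (ext c e))) = k.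
      by case: hX => _ h _; rewrite -(size_map size) -/(shape _) h /shape size_map.
    have hYk : size (stks (bot_of c0 (ext c e))) = k.
      by apply: size_stks_bot => //; rewrite -hsz.
    case hx: (act u (Some (top_of c0 (ext c e)))) hn => [dx|] // _.
    rewrite hx in huv.
    by rewrite (act_ext hXk hYk hx) (act_ext hXk hYk (esym huv)).
  case hu: (act u (Some c)) => [d|].
    by rewrite (transfer he ge hk hz hB hu).
  case hv: (act v (Some c)) => [d|] //.
  by rewrite (transfer he ge hk hz (esym hB) hv) in hu.
- move=> hequiv.
  pose n := size u.
  pose L := iota 0 (n + n * k).
  pose c := Config (take n L) (reshape (nseq k n) (drop n L)) [::].
  have hsd : size (drop n L) = n * k by rewrite size_drop size_iota; lia.
  have hk : size (stks c) = k by rewrite /= size_reshape size_nseq.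
  have hel : elems c = L.
    rewrite /elems /= reshapeKr ?sumn_nseq ?hsd ?cats0 ?cat_take_drop //; lia.
  have hst : is_state k (Some c).
    by rewrite /= /wf_config hk eqxx /=; rewrite -/(elems c) hel iota_uniq.
  exists (Some c); split => //; first exact: hequiv.
  apply: act_legal => //; rewrite /Big; apply/andP; split.
    by rewrite /= size_takel // size_iota leq_addr.
  rewrite /= -(all_map size (leq n)) -/(shape _) reshapeKl ?sumn_nseq ?hsd; last lia.
  by apply/allP => z; rewrite mem_nseq => /andP [_ /eqP ->].
Qed.
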